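(* Let $D\subseteq U$ be compact with diameter $\operatorname{diam}(D)=\max_{d,d'\in D}\rho(d,d')$, let $\epsilon\ge0$, $0\le\delta\le1$, and let $\{X_d:\Omega\to U\mid d\in D\}$ be a family of measurable maps such that $$\mathbb{P}(X_d\in A)\le e^\epsilon\,\mathbb{P}(X_{d'}\in A)+\delta$$ for all $d,d'\in D$ and all $A\in\mathcal{A}_U$. Then $$\mathcal{E}:=\sup_{d\in D}\mathbb{E}[\rho(X_d,d)]\ \ge\ (1-\delta)\,\frac{\operatorname{diam}(D)}{2(1+e^\epsilon)}.$$
   Context: $(U,\rho)$ is a metric space with Borel $\sigma$-algebra $\mathcal{A}_U$, and $(\Omega,\mathcal{F},\mathbb{P})$ is a probability space. $\rho(X_d,d)$ is a nonnegative random variable; its expectation may be $+\infty$. *)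

(* Defs.v *)
From HB Require Import structures.
From mathcomp Require Import all_boot all_order all_algebra.
From mathcomp Require Import all_classical all_reals all_analysis.
Set Implicit Arguments. Unset Strict Implicit. Unset Printing Implicit Defensive.
Import Order.TTheory GRing.Theory Num.Theory.
Local Open Scope classical_set_scope.
Local Open Scope ring_scope.

Definition is_metric (R : realType) (U : Type) (rho : U -> U -> R) : Prop :=
  (forall x y, 0 <= rho x y) /\
  (forall x y, rho x y = 0 <-> x = y) /\
  (forall x y, rho x y = rho y x) /\
  (forall x y z, rho x z <= rho x y + rho y z).

Definition rho_ball (R : realType) (U : Type) (rho : U -> U -> R) (x : U) (r : R)
  : set U := [set y | rho x y < r].

Definition rho_open (R : realType) (U : Type) (rho : U -> U -> R) (A : set U) : Prop :=
  forall x, A x -> exists2 r : R, 0 < r & rho_ball rho x r `<=` A.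

Definition rho_compact (R : realType) (U : Type) (rho : U -> U -> R) (D : set U) : Prop :=
  forall (I : Type) (F : I -> set U),
    (forall i, rho_open rho (F i)) -> D `<=` \bigcup_i F i ->
    exists J : set I, finite_set J /\ D `<=` \bigcup_(i in J) F i.

(* diameter of D: sup_{d,d' in D} rho d d' (a max when D is compact nonempty) *)
Definition rho_diam (R : realType) (U : Type) (rho : U -> U -> R) (D : set U) : \bar R :=
  ereal_sup [set (rho d d')%:E | d in D & d' in D].

(* Main.v *)
Require Import Defs.
From HB Require Import structures.
From mathcomp Require Import all_boot all_order all_algebra.
From mathcomp Require Import all_classical all_reals all_analysis.
From mathcomp Require Import lra measurable_realfun.
Import Order.TTheory GRing.Theory Num.Theory.
Local Open Scope classical_set_scope.
Local Open Scope ring_scope.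

Lemma rho_ball_open (R : realType) (U : Type) (rho : U -> U -> R) (d : U) (r : R) :
  is_metric rho -> rho_open rho [set y | rho y d < r].
Proof.
move=> [h0 [h1 [hs ht]]] x /= hx; exists (r - rho x d); first by rewrite subr_gt0.
move=> y /=; rewrite /rho_ball /= => hy.
have := ht y x d; rewrite (hs y x); lra.
Qed.

Lemma rho_meas (R : realType) (dU : measure_display) (U : measurableType dU)
  (rho : U -> U -> R) d : is_metric rho ->
  (@measurable dU U = <<s rho_open rho >>) ->
  measurable_fun setT (fun u => rho u d).
Proof.
move=> hm hU; apply: (measurability _ (RGenInftyO.measurableE R)) => //.
move=> _ [_ [x ->] <-]; rewrite setTI hU; apply: sub_sigma_algebra.
have -> : (fun u => rho u d) @^-1` `]-oo, x[ = [set y | rho y d < x].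
  by apply/seteqP; split => y /=; rewrite in_itv.
exact: rho_ball_open.
Qed.

Lemma markov_ineq (R : realType) (dO : measure_display) (Omega : measurableType dO)
  (P : probability Omega R) (f : Omega -> R) (A : set Omega) (r : R) :
  0 <= r -> measurable_fun setT f -> (forall w, 0 <= f w) -> measurable A ->
  (forall w, A w -> r <= f w) ->
  (r%:E * P A <= \int[P]_w (f w)%:E)%E.
Proof.
move=> r0 mf f0 mA hA.
have -> : (r%:E * P A = \int[P]_w (r * \1_A w)%:E)%E.
  rewrite (integralZl_indic _ (fun _ => A)) //; last by move=> /lt_le_trans /(_ r0); rewrite ltxx.
  by rewrite integral_indic // setIT.
apply: ge0_le_integral => //.
- by move=> w _; rewrite lee_fin mulr_ge0 // indicE; case: (w \in A).
- by apply: measurableT_comp => //; apply: measurable_funM => //; exact: measurable_indic.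
- by apply: measurableT_comp.
- move=> w _; rewrite lee_fin indicE; case: (boolP (w \in A)) => /= h.
    by rewrite mulr1; apply: hA; rewrite -inE.
  by rewrite mulr0.
Qed.

Theorem mainTheorem11 (R : realType)
  (dU : measure_display) (U : measurableType dU) (rho : U -> U -> R)
  (dO : measure_display) (Omega : measurableType dO) (P : probability Omega R)
  (D : set U) (X : U -> Omega -> U) (eps delta : R) :
  is_metric rho ->
  (* the sigma-algebra of U is the Borel sigma-algebra of the metric rho *)
  (@measurable dU U = <<s rho_open rho >>) ->
  rho_compact rho D -> D !=set0 ->
  0 <= eps -> 0 <= delta -> delta <= 1 ->
  (forall d, D d -> measurable_fun setT (X d)) ->
  (forall d d', D d -> D d' -> forall A : set U, measurable A ->
     P (X d @^-1` A) <= (expR eps)%:E * P (X d' @^-1` A) + delta%:E)%E ->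
  (((1 - delta) / (2 * (1 + expR eps)))%:E * rho_diam rho D
     <= ereal_sup [set (\int[P]_w (rho (X d w) d)%:E)%E | d in D])%E.
Proof.
move=> hm hU _ [d0 Dd0] eps0 del0 del1 mX hDP.
have hm' := hm; move: hm' => [h0 [h1 [hs ht]]].
set E := ereal_sup _.
have mf : forall d d', D d -> measurable_fun setT (fun w => rho (X d w) d').
  move=> d d' Dd; exact: (measurableT_comp (@rho_meas _ _ _ rho d' hm hU) (mX d Dd)).
have intE : forall d, D d -> (\int[P]_w (rho (X d w) d)%:E <= E)%E.
  by move=> d Dd; apply: ereal_sup_ubound; exists d.
have E0 : (0 <= E)%E.
  apply: le_trans (intE d0 Dd0); apply: integral_ge0 => w _; by rewrite lee_fin h0.
have [->|Ey] := eqVneq E +oo%E; first by rewrite leey.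
have fE : E \is a fin_num by rewrite ge0_fin_numE // ltey.
set e0 := fine E.
have Ee : E = e0%:E by rewrite fineK.
have e00 : 0 <= e0 by rewrite -lee_fin -Ee.
set e := expR eps.
have e_ge0 : 0 <= e by rewrite /e expR_ge0.
have Pfin : forall A, measurable A -> P A = (fine (P A))%:E.
  by move=> A mA; rewrite fineK // fin_num_measure.
have key : forall d d', D d -> D d' -> (1 - delta) * rho d d' <= 2 * (1 + e) * e0.
  move=> d d' Dd Dd'.
  have [t0|tpos] := leP (rho d d') 0.
    have -> : rho d d' = 0 by apply/eqP; rewrite eq_le t0 h0.
    by rewrite mulr0 mulr_ge0 // mulr_ge0 //; lra.
  set r := rho d d' / 2.
  have r0 : 0 < r by rewrite /r divr_gt0.
  set B := [set y | rho y d < r].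
  have mB : measurable B.
    by rewrite hU; apply: sub_sigma_algebra; exact: (@rho_ball_open _ _ rho d r hm).
  have mpre : forall d1, D d1 -> forall A, measurable A -> measurable (X d1 @^-1` A).
    by move=> d1 Dd1 A mA; rewrite -[X _ @^-1` _]setTI; apply: mX.
  have M1 : (r%:E * P (X d @^-1` ~` B) <= e0%:E)%E.
    rewrite -Ee; apply: le_trans (intE d Dd).
    apply: markov_ineq => //; first exact: ltW.
    - exact: mf.
    - by apply: mpre => //; exact: measurableC.
    - by move=> w /= /negP; rewrite -leNgt => /=.
  have M2 : (r%:E * P (X d' @^-1` B) <= e0%:E)%E.
    rewrite -Ee; apply: le_trans (intE d' Dd').
    apply: markov_ineq => //; first exact: ltW.
    - exact: mf.
    - exact: mpre.
    move=> w /= hw; have := ht d (X d' w) d'; rewrite (hs d (X d' w)) /r.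
    move: hw; rewrite /B /r /= => hw; lra.
  have DP := hDP d d' Dd Dd' B mB.
  rewrite -preimage_setC probability_setC in M1; last exact: mpre.
  move: M1 M2 DP.
  rewrite (Pfin (X d @^-1` B)); last exact: mpre.
  rewrite (Pfin (X d' @^-1` B)); last exact: mpre.
  set p := fine (P (X d @^-1` B)); set q := fine (P (X d' @^-1` B)).
  rewrite -EFinB -!EFinM -EFinD !lee_fin => M1 M2 DP.
  rewrite -/e in DP.
  have H1 : r * (p - (e * q + delta)) <= 0.
    by rewrite mulr_ge0_le0 //; [exact: ltW | lra].
  have H2 : e * (r * q - e0) <= 0.
    by rewrite mulr_ge0_le0 //; lra.
  rewrite /r in H1 H2 M1 M2 *.
  nra.
set c := (1 - delta) / (2 * (1 + e)).
have den : 0 < 2 * (1 + e) by rewrite mulr_gt0 //; lra.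
have c0 : 0 <= c by rewrite /c divr_ge0 //; [lra | exact: ltW].
rewrite Ee.
have [c00|cpos] := eqVneq c 0.
  by rewrite c00 mul0e lee_fin.
have cp : 0 < c by rewrite lt_def cpos c0.
have ub : (rho_diam rho D <= (e0 / c)%:E)%E.
  apply: ge_ereal_sup => _ [d Dd] [d' Dd' <-].
  rewrite lee_fin ler_pdivlMr //.
  have K := key d d' Dd Dd'; rewrite /c mulrA ler_pdivrMr //; nra.
apply: le_trans (lee_wpmul2l _ ub) _; first by rewrite lee_fin.
by rewrite -EFinM lee_fin mulrC divfK.
Qed.
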